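(* Let $2\le d_1\le d_2\le d_3\le d_4$ and let $\rho$ be any (normalized) mixed state on $H_1\otimes H_2\otimes H_3\otimes H_4$ with $\dim H_i=d_i$. Then for every integer $s$ with $2\le s\le d_1$, $$C^2(\rho)\ \ge\ \frac{1}{\binom{d_1-2}{s-2}\binom{d_2-2}{s-2}\binom{d_3-1}{s-1}\binom{d_4-1}{s-1}}\sum_{\rho_{s\otimes s\otimes s\otimes s}}C^2(\rho_{s\otimes s\otimes s\otimes s}),$$ where the sum runs over all possible $s\otimes s\otimes s\otimes s$ substates $\rho_{s\otimes s\otimes s\otimes s}$ of $\rho$.
   Context: Each $H_i\cong\mathbb{C}^{d_i}$ has a fixed computational basis. $C$ denotes the four-partite concurrence: for a (not necessarily normalized) vector $|\varphi\rangle$ with $\sigma=|\varphi\rangle\langle\varphi|$, $C(|\varphi\rangle)=2^{-1}\sqrt{14(\mathrm{tr}\,\sigma)^2-\sum_\alpha\mathrm{tr}(\sigma_\alpha^2)}$, $\alpha$ running over the 14 nonempty proper subsets of $\{1,2,3,4\}$ and $\sigma_\alpha=\mathrm{tr}_{\bar\alpha}\sigma$; for a (possibly unnormalized) positive semidefinite $\sigma$, $C(\sigma)=\min\sum_iC(|\psi_i\rangle)$ over all decompositions $\sigma=\sum_i|\psi_i\rangle\langle\psi_i|$ into unnormalized vectors. Substates: given subsets $S_i\subseteq\{1,\dots,d_i\}$ with $|S_i|=s$ and projectors $G_i=\sum_{x\in S_i}|x\rangle\langle x|$, the $s\otimes s\otimes s\otimes s$ substate of $\rho$ is the unnormalized operator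 $(G_1\otimes G_2\otimes G_3\otimes G_4)\rho(G_1\otimes G_2\otimes G_3\otimes G_4)$ on $\otimes_i\mathrm{span}\{|x\rangle:x\in S_i\}$. $\binom{n}{k}=n!/(k!(n-k)!)$. *)

(* Defs.v *)
From HB Require Import structures.
From mathcomp Require Import all_boot all_order all_algebra.
From mathcomp Require Import complex.
From mathcomp Require Import classical_sets reals.

Set Implicit Arguments.
Unset Strict Implicit.
Unset Printing Implicit Defensive.

Import Order.TTheory GRing.Theory Num.Theory.
Local Open Scope ring_scope.

(* A 4-partite system with local computational bases indexed by the finite
   types I1, I2, I3, I4 has basis indexed by ((I1 * I2) * I3) * I4.
   Vectors are functions T -> R[i], operators are kernels T -> T -> R[i]
   (matrix entries <x|sigma|y> = sigma x y). *)

Section Quantum.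
Variable R : realType.
Variables I1 I2 I3 I4 : finType.

Definition idx := (((I1 * I2) * I3) * I4)%type.

(* subsystems are numbered 0,1,2,3 (standing for 1,2,3,4) *)
Definition pickc {U : Type} (b : bool) (u v : U) : U := if b then u else v.

Definition mix (a : {set 'I_4}) (x y : idx) : idx :=
  (((pickc ((inord 0 : 'I_4) \in a) x.1.1.1 y.1.1.1,
     pickc ((inord 1 : 'I_4) \in a) x.1.1.2 y.1.1.2),
     pickc ((inord 2 : 'I_4) \in a) x.1.2 y.1.2),
     pickc ((inord 3 : 'I_4) \in a) x.2 y.2).

Definition optrace (sigma : idx -> idx -> R[i]) : R[i] := \sum_(x : idx) sigma x x.

(* tr(sigma_a ^2) where sigma_a = tr_{complement of a} sigma.
   Writing x = (a-part u, rest v), y = (a-part u', rest v'):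
   sigma_a(u,u') = sum_v sigma((u,v),(u',v)), hence
   tr(sigma_a^2) = sum_{u,u',v,v'} sigma((u,v),(u',v)) sigma((u',v'),(u,v'))
                 = sum_{x,y} sigma(x, mix a y x) sigma(y, mix a x y). *)
Definition trRed2 (a : {set 'I_4}) (sigma : idx -> idx -> R[i]) : R[i] :=
  \sum_(x : idx) \sum_(y : idx) sigma x (mix a y x) * sigma y (mix a x y).

Definition proj (phi : idx -> R[i]) : idx -> idx -> R[i] :=
  fun x y => phi x * conjc (phi y).

(* The radicand is real; we take its real part. *)
Definition conc_vec (phi : idx -> R[i]) : R :=
  2^-1 * Num.sqrt (complex.Re
    (14%:R * (optrace (proj phi)) ^+ 2
     - \sum_(a : {set 'I_4} | (a != finset.set0) && (a != finset.setT)) trRed2 a (proj phi))).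

Definition is_decomp (sigma : idx -> idx -> R[i]) (n : nat)
    (psi : 'I_n -> idx -> R[i]) : Prop :=
  forall x y, sigma x y = \sum_(k < n) psi k x * conjc (psi k y).

(* concurrence of a positive semidefinite operator: the minimum (= infimum,
   which is attained) of sum_i C(psi_i) over all decompositions *)
Definition conc_mixed (sigma : idx -> idx -> R[i]) : R :=
  inf [set c : R | exists (n : nat) (psi : 'I_n -> idx -> R[i]),
                     is_decomp sigma psi /\ c = \sum_(k < n) conc_vec (psi k)]%classic.

(* positive semidefinite (hence Hermitian, over C) operator *)
Definition psd (sigma : idx -> idx -> R[i]) : Prop :=
  forall v : idx -> R[i],
    0 <= \sum_(x : idx) \sum_(y : idx) conjc (v x) * sigma x y * v y.

Definition density (rho : idx -> idx -> R[i]) : Prop :=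
  psd rho /\ optrace rho = 1.

End Quantum.

(* The substate of rho on the subsets S1,...,S4 of the local bases:
   (G1 x G2 x G3 x G4) rho (G1 x G2 x G3 x G4) as an operator on
   the tensor product of span{|x> : x in S_i}, i.e. indexed by the
   subtypes {x | x \in S_i}. *)
Definition substate (R : realType) (d1 d2 d3 d4 : nat)
  (rho : idx 'I_d1 'I_d2 'I_d3 'I_d4 -> idx 'I_d1 'I_d2 'I_d3 'I_d4 -> R[i])
  (S1 : {set 'I_d1}) (S2 : {set 'I_d2}) (S3 : {set 'I_d3}) (S4 : {set 'I_d4})
  : idx {x | x \in S1} {x | x \in S2} {x | x \in S3} {x | x \in S4} ->
    idx {x | x \in S1} {x | x \in S2} {x | x \in S3} {x | x \in S4} -> R[i] :=
  fun u v =>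
    rho (((val u.1.1.1, val u.1.1.2), val u.1.2), val u.2)
        (((val v.1.1.1, val v.1.1.2), val v.1.2), val v.2).
Arguments substate {R d1 d2 d3 d4} rho S1 S2 S3 S4 _ _.

(* Main.v *)
Require Import Defs.
From HB Require Import structures.
From mathcomp Require Import all_boot all_order all_algebra.
From mathcomp Require Import complex.
From mathcomp Require Import classical_sets reals.
From mathcomp Require Import ring lra zify.
Import Order.TTheory GRing.Theory Num.Theory.
Local Open Scope ring_scope.
Local Open Scope complex_scope.
Set Implicit Arguments.
Unset Strict Implicit.
Unset Printing Implicit Defensive.


Lemma card14 : #|[pred a : {set 'I_4} | (a != finset.set0) && (a != finset.setT)]| = 14%N.
Proof.
have h16 : #|{set 'I_4}| = 16%N.
  by rewrite -cardsT -powersetT card_powerset cardsT card_ord.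
have hT : ([set: 'I_4] == finset.set0) = false.
  apply/negP => /eqP h; have : (ord0 : 'I_4) \in [set: 'I_4] by rewrite inE.
  by rewrite h inE.
have := cardD1 finset.set0 [pred a : {set 'I_4} | true].
have := cardD1 finset.setT [predD1 [pred a : {set 'I_4} | true] & finset.set0].
rewrite !inE /= hT /= => h1 h2.
have -> : #|[pred a : {set 'I_4} | (a != finset.set0) && (a != [set: 'I_4])]| = #|[predD1 [predD1 [pred a : {set 'I_4} | true] & finset.set0] & finset.setT]|.
  by apply: eq_card => a; rewrite !inE andbC andbT.
have h3 : #|[pred a : {set 'I_4} | true]| = 16%N by rewrite -h16; apply: eq_card.
rewrite h3 h1 in h2. by case: h2.
Qed.

Section PartA.
Variable R : realType.
Variables I1 I2 I3 I4 : finType.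
Local Notation C := R[i].
Local Notation T := (idx I1 I2 I3 I4).

Lemma mixK (a : {set 'I_4}) (x y : T) : mix a (mix a x y) (mix a y x) = x.
Proof.
case: x => [[[x1 x2] x3] x4]; case: y => [[[y1 y2] y3] y4].
rewrite /mix /pickc /=. by do 4 case: (_ \in a).
Qed.

Lemma sum2_mix a (F : T -> T -> C) :
  \sum_x \sum_y F (mix a y x) (mix a x y) = \sum_x \sum_y F x y.
Proof.
rewrite !pair_bigA /=.
pose f (p : T * T) := (mix a p.2 p.1, mix a p.1 p.2).
have finv : involutive f by move=> [x y]; rewrite /f /= !mixK.
rewrite [RHS](reindex_inj (inv_inj finv)) /=.
by [].
Qed.

Definition wv a (psi : T -> C) x y :=
  psi x * psi y - psi (mix a y x) * psi (mix a x y).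

Lemma sum_wv a psi :
  \sum_x \sum_y wv a psi x y * conjc (wv a psi x y)
  = 2%:R * (optrace (proj psi))^+2 - 2%:R * trRed2 a (proj psi).
Proof.
pose P x y := psi x * psi y * conjc (psi x * psi y).
pose Q x y := psi x * psi y * conjc (psi (mix a y x) * psi (mix a x y)).
have E x y : wv a psi x y * conjc (wv a psi x y) =
   (P x y - Q x y) - (Q (mix a y x) (mix a x y) - P (mix a y x) (mix a x y)).
  rewrite /wv /P /Q !mixK !rmorphB /=. ring.
under eq_bigr do under eq_bigr do rewrite E.
under eq_bigr do rewrite !sumrB.
rewrite !sumrB.
rewrite (sum2_mix a Q) (sum2_mix a P).
have -> : \sum_x \sum_y P x y = optrace (proj psi) ^+ 2.
  rewrite expr2 /optrace /proj mulr_suml; apply: eq_bigr => x _.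
  rewrite mulr_sumr; apply: eq_bigr => y _; rewrite /P rmorphM /=; ring.
have -> : \sum_x \sum_y Q x y = trRed2 a (proj psi).
  rewrite /trRed2 /proj; apply: eq_bigr => x _; apply: eq_bigr => y _.
  rewrite /Q rmorphM /=; ring.
ring.
Qed.


Definition nr (z : C) : R := complex.Re (z * conjc z).

Lemma nrE z : z * conjc z = (nr z)%:C.
Proof. by case: z => a b; rewrite /nr /=; congr (_ +i* _); ring. Qed.

Lemma nr_ge0 z : 0 <= nr z.
Proof.
case: z => a b; rewrite /nr /=.
have -> : a * a - b * - b = a ^+ 2 + b ^+ 2 by ring.
by rewrite addr_ge0 // sqr_ge0.
Qed.

Definition Gv psi := \sum_(a : {set 'I_4} | (a != finset.set0) && (a != finset.setT))
   \sum_x \sum_y nr (wv a psi x y).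

Lemma Gv_ge0 psi : 0 <= Gv psi.
Proof. by apply: sumr_ge0 => a _; apply: sumr_ge0 => x _; apply: sumr_ge0 => y _; apply: nr_ge0. Qed.

Lemma conc_vec_sq psi : conc_vec psi ^+ 2 = Gv psi / 8%:R.
Proof.
have H : \sum_(a : {set 'I_4} | (a != finset.set0) && (a != finset.setT))
   (2%:R * (optrace (proj psi))^+2 - 2%:R * trRed2 a (proj psi)) = (Gv psi)%:C.
  rewrite /Gv raddf_sum; apply: eq_bigr => a _.
  rewrite -sum_wv raddf_sum; apply: eq_bigr => x _.
  rewrite raddf_sum; apply: eq_bigr => y _.
  by rewrite nrE.
rewrite sumrB sumr_const card14 -mulr_sumr in H.
have key : 14%:R * (optrace (proj psi)) ^+ 2
     - \sum_(a : {set 'I_4} | (a != finset.set0) && (a != finset.setT)) trRed2 a (proj psi)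
     = (Gv psi / 2%:R)%:C.
  rewrite rmorphM fmorphV /= rmorph_nat -H.
  by field.
rewrite /conc_vec key /= exprMn sqr_sqrtr; last first.
  by rewrite divr_ge0 ?Gv_ge0 ?ler0n.
by field.
Qed.

End PartA.

Section PartB1.
Variable R : realType.
Variables I1 I2 I3 I4 : finType.
Local Notation C := R[i].
Local Notation T := (idx I1 I2 I3 I4).

Definition nd (x y : T) : nat :=
  ((x.1.1.1 != y.1.1.1) + (x.1.1.2 != y.1.1.2) + (x.1.2 != y.1.2) + (x.2 != y.2))%N.

Lemma wv_nd a (psi : T -> C) x y : (nd x y < 2)%N -> wv a psi x y = 0.
Proof.
case: x => [[[x1 x2] x3] x4]; case: y => [[[y1 y2] y3] y4].
rewrite /nd /wv /mix /pickc /=.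
case: (eqVneq x1 y1) => [<-|n1]; case: (eqVneq x2 y2) => [<-|n2];
case: (eqVneq x3 y3) => [<-|n3]; case: (eqVneq x4 y4) => [<-|n4];
rewrite ?eqxx ?n1 ?n2 ?n3 ?n4 //= => _;
do 4 case: (_ \in a); by rewrite ?subrr // mulrC subrr.
Qed.
End PartB1.

Lemma sum4 (R : realType) (J1 J2 J3 J4 : finType) (F : idx J1 J2 J3 J4 -> R) :
  \sum_p F p = \sum_a \sum_b \sum_c \sum_d F (((a, b), c), d).
Proof.
rewrite pair_bigA pair_bigA pair_bigA.
by apply: eq_bigr => -[[[a b] c] d].
Qed.

Lemma sum_sub (R : realType) (J : finType) (S : {set J}) (f : J -> R) :
  \sum_(u : {x | x \in S}) f (val u) = \sum_x (x \in S)%:R * f x.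
Proof.
rewrite -big_sub big_mkcond; apply: eq_bigr => x _.
by case: (x \in S); rewrite ?mul1r ?mul0r.
Qed.

Section PartB2.
Variable R : realType.
Variables I1 I2 I3 I4 : finType.
Local Notation C := R[i].
Local Notation T := (idx I1 I2 I3 I4).
Variables (S1 : {set I1}) (S2 : {set I2}) (S3 : {set I3}) (S4 : {set I4}).
Local Notation U := (idx {x | x \in S1} {x | x \in S2} {x | x \in S3} {x | x \in S4}).

Definition emb (u : U) : T := (((val u.1.1.1, val u.1.1.2), val u.1.2), val u.2).
Definition vsub (psi : T -> C) : U -> C := fun u => psi (emb u).
Definition inbox (x : T) : bool :=
  [&& x.1.1.1 \in S1, x.1.1.2 \in S2, x.1.2 \in S3 & x.2 \in S4].

Lemma emb_mix a u v : emb (mix a u v) = mix a (emb u) (emb v).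
Proof.
case: u => [[[x1 x2] x3] x4]; case: v => [[[y1 y2] y3] y4].
rewrite /emb /mix /pickc /=. by do 4 case: (_ \in a).
Qed.

Lemma wv_sub a psi u v : wv a (vsub psi) u v = wv a psi (emb u) (emb v).
Proof. by rewrite /wv /vsub !emb_mix. Qed.

Lemma sum_emb (F : T -> R) : \sum_u F (emb u) = \sum_x (inbox x)%:R * F x.
Proof.
rewrite sum4 [RHS]sum4 /emb /=.
rewrite (sum_sub S1 (fun a => \sum_(u2 : {x | x \in S2}) \sum_(u3 : {x | x \in S3})
   \sum_(u4 : {x | x \in S4}) F (((a, val u2), val u3), val u4))).
apply: eq_bigr => a _.
rewrite (sum_sub S2 (fun b => \sum_(u3 : {x | x \in S3})
   \sum_(u4 : {x | x \in S4}) F (((a, b), val u3), val u4))).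
rewrite mulr_sumr; apply: eq_bigr => b _.
rewrite (sum_sub S3 (fun c => \sum_(u4 : {x | x \in S4}) F (((a, b), c), val u4))).
rewrite mulr_sumr mulr_sumr; apply: eq_bigr => c _.
rewrite (sum_sub S4 (fun d => F (((a, b), c), d))).
rewrite !mulr_sumr; apply: eq_bigr => d _ /=.
rewrite /inbox /=; by case: (a \in S1); case: (b \in S2); case: (c \in S3); case: (d \in S4);
  rewrite /= ?mul1r ?mul0r.
Qed.

Lemma Gv_sub psi : Gv (vsub psi) =
  \sum_(a : {set 'I_4} | (a != finset.set0) && (a != finset.setT))
    \sum_x \sum_y ((inbox x)%:R * (inbox y)%:R * nr (wv a psi x y)).
Proof.
rewrite /Gv; apply: eq_bigr => a _.
under eq_bigr => u _ do under eq_bigr => v _ do rewrite wv_sub.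
under eq_bigr => u _ do rewrite (sum_emb (fun y => nr (wv a psi (emb u) y))).
rewrite (sum_emb (fun x => \sum_y (inbox y)%:R * nr (wv a psi x y))).
apply: eq_bigr => x _; rewrite mulr_sumr; apply: eq_bigr => y _.
by rewrite mulrA.
Qed.

End PartB2.

Lemma card_cnt (J : finType) (s : nat) (a b : J) :
  (#|[pred S : {set J} | (#|S| == s) && ((a \in S) && (b \in S))]|
    <= 'C(#|J| - #|[set a; b]|, s - #|[set a; b]|))%N.
Proof.
set A0 := [set a; b].
have -> : #|[pred S : {set J} | (#|S| == s) && ((a \in S) && (b \in S))]|
   = #|[set S : {set J} | (#|S| == s) && (A0 \subset S)]|.
  by apply: eq_card => S; rewrite !inE /A0 finset.subUset !finset.sub1set.
set D := [set S : {set J} | (#|S| == s) && (A0 \subset S)].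
have inj : {in D &, injective (fun S => S :\: A0)}.
  move=> S1 S2; rewrite !inE => /andP[_ h1] /andP[_ h2] e.
  apply/finset.setP => x; case xA: (x \in A0).
    by rewrite (fintype.subsetP h1 _ xA) (fintype.subsetP h2 _ xA).
  by have := congr1 (fun X : {set J} => x \in X) e; rewrite /= !finset.in_setD xA.
rewrite -(card_in_imset inj).
have <- : #|~: A0| = (#|J| - #|A0|)%N by rewrite cardsCs finset.setCK.
rewrite -cards_draws; apply: subset_leq_card.
apply/fintype.subsetP => _ /imsetP[S SD ->]; move: SD; rewrite !inE => /andP[/eqP hs h].
rewrite cardsDS // hs eqxx andbT.
by apply/fintype.subsetP => x; rewrite !inE => /andP[].
Qed.

Lemma cnt_le (R : realType) (J : finType) (s : nat) (a b : J) :
  \sum_(S : {set J} | #|S| == s) ((a \in S) && (b \in S))%:R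
   <= ('C(#|J| - (a != b).+1, s - (a != b).+1))%:R :> R.
Proof.
have -> : \sum_(S : {set J} | #|S| == s) ((a \in S) && (b \in S))%:R
   = \sum_(S : {set J} | (#|S| == s) && ((a \in S) && (b \in S))) (1 : R).
  by rewrite big_mkcondr; apply: eq_bigr => S _; case: (_ && _).
rewrite sumr_const ler_nat -cards2.
exact: card_cnt.
Qed.

Section NumB.
Variable s : nat.
Hypothesis hs : (2 <= s)%N.
Definition cA d := 'C(d - 2, s - 2).
Definition cB d := 'C(d - 1, s - 1).
Definition bnd d (e : bool) := if e then cB d else cA d.

Lemma AB_rel d : (s <= d)%N -> ((s - 1) * cB d = (d - 1) * cA d)%N.
Proof.
move=> hd; rewrite /cA /cB.
have := mul_bin_diag (d - 1) (s - 2).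
have -> : (d - 1).-1 = (d - 2)%N by lia.
have -> : (s - 2).+1 = (s - 1)%N by lia.
by move=> ->.
Qed.

Lemma A_le_B d : (s <= d)%N -> (cA d <= cB d)%N.
Proof.
move=> hd; have s1 : (0 < s - 1)%N by lia.
rewrite -(leq_pmul2l s1) AB_rel //.
by apply: leq_mul => //; lia.
Qed.

Lemma swapAB d d' : (s <= d)%N -> (d <= d')%N -> (cB d * cA d' <= cA d * cB d')%N.
Proof.
move=> hd hd'; have s1 : (0 < s - 1)%N by lia.
rewrite -(leq_pmul2l s1).
have r1 := congr1 (muln^~ (cA d')) (AB_rel hd).
have r2 := congr1 (muln (cA d)) (@AB_rel d' ltac:(lia)).
have := leq_mul (leq_sub2r 1 hd') (leqnn (cA d * cA d')).
simpl in r1, r2. lia.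
Qed.

Variables d1 d2 d3 d4 : nat.
Hypotheses (h1 : (s <= d1)%N) (h12 : (d1 <= d2)%N) (h23 : (d2 <= d3)%N) (h34 : (d3 <= d4)%N).

Lemma bnd_prod e1 e2 e3 e4 : (2 <= ~~e1 + ~~e2 + ~~e3 + ~~e4)%N ->
  (bnd d1 e1 * bnd d2 e2 * bnd d3 e3 * bnd d4 e4 <= cA d1 * cA d2 * cB d3 * cB d4)%N.
Proof.
have ab3 := @A_le_B d3 ltac:(lia). have ab4 := @A_le_B d4 ltac:(lia).
have sw13 := @swapAB d1 d3 ltac:(lia) ltac:(lia).
have sw14 := @swapAB d1 d4 ltac:(lia) ltac:(lia).
have sw23 := @swapAB d2 d3 ltac:(lia) ltac:(lia).
have sw24 := @swapAB d2 d4 ltac:(lia) ltac:(lia).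
case: e1; case: e2; case: e3; case: e4 => //= _; rewrite /bnd.
- have := leq_mul sw13 sw24; lia.
- have := leq_mul sw14 (leqnn (cA d2 * cB d3)); lia.
- have := leq_mul sw13 (leqnn (cA d2 * cB d4)); lia.
- have := leq_mul (leq_mul sw13 ab4) (leqnn (cA d2)); lia.
- have := leq_mul sw24 (leqnn (cA d1 * cB d3)); lia.
- have := leq_mul sw23 (leqnn (cA d1 * cB d4)); lia.
- have := leq_mul (leq_mul sw23 ab4) (leqnn (cA d1)); lia.
- have := leq_mul ab4 (leqnn (cA d1 * cA d2 * cB d3)); lia.
- have := leq_mul ab3 (leqnn (cA d1 * cA d2 * cB d4)); lia.
- have := leq_mul (leq_mul ab3 ab4) (leqnn (cA d1 * cA d2)); lia.
Qed.
End NumB.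

Lemma push3 (R : realType) (K A X Y : finType) (P : pred K) (Q : pred A)
  (f : K -> A -> X -> Y -> R) :
  \sum_(k | P k) \sum_(a | Q a) \sum_x \sum_y f k a x y
  = \sum_(a | Q a) \sum_x \sum_y \sum_(k | P k) f k a x y.
Proof.
rewrite exchange_big; apply: eq_bigr => a _.
rewrite exchange_big; apply: eq_bigr => x _.
by rewrite exchange_big.
Qed.

Lemma prod4 (R : realType) (K1 K2 K3 K4 : finType) (P1 : pred K1) (P2 : pred K2)
  (P3 : pred K3) (P4 : pred K4) (c1 : K1 -> R) (c2 : K2 -> R) (c3 : K3 -> R) (c4 : K4 -> R) :
  \sum_(k1 | P1 k1) \sum_(k2 | P2 k2) \sum_(k3 | P3 k3) \sum_(k4 | P4 k4)
     (c1 k1 * c2 k2 * c3 k3 * c4 k4)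
  = (\sum_(k1 | P1 k1) c1 k1) * (\sum_(k2 | P2 k2) c2 k2) * (\sum_(k3 | P3 k3) c3 k3)
     * (\sum_(k4 | P4 k4) c4 k4).
Proof.
symmetry; rewrite !mulr_suml; apply: eq_bigr => k1 _.
rewrite [c1 k1 * _]mulr_sumr !mulr_suml; apply: eq_bigr => k2 _.
rewrite [c1 k1 * c2 k2 * _]mulr_sumr !mulr_suml; apply: eq_bigr => k3 _.
by rewrite mulr_sumr.
Qed.

Lemma cnt_bnd (R : realType) d s (a b : 'I_d) :
  \sum_(S : {set 'I_d} | #|S| == s) ((a \in S) && (b \in S))%:R
   <= (bnd s d (a == b))%:R :> R.
Proof.
apply: le_trans (cnt_le R s a b) _.
rewrite card_ord /bnd /cA /cB; by case: (a == b).
Qed.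

Section B5.
Variable R : realType.
Variables (s d1 d2 d3 d4 : nat).
Hypotheses (hs : (2 <= s)%N) (h1 : (s <= d1)%N) (h12 : (d1 <= d2)%N)
  (h23 : (d2 <= d3)%N) (h34 : (d3 <= d4)%N).
Local Notation T := (idx 'I_d1 'I_d2 'I_d3 'I_d4).
Local Notation C := R[i].

Lemma Nbox (x y : T) : (2 <= nd x y)%N ->
  \sum_(S1 : {set 'I_d1} | #|S1| == s) \sum_(S2 : {set 'I_d2} | #|S2| == s)
  \sum_(S3 : {set 'I_d3} | #|S3| == s) \sum_(S4 : {set 'I_d4} | #|S4| == s)
   ((inbox S1 S2 S3 S4 x)%:R * (inbox S1 S2 S3 S4 y)%:R)
  <= (cA s d1 * cA s d2 * cB s d3 * cB s d4)%:R :> R.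
Proof.
move=> hnd.
have E : forall S1 S2 S3 S4, (inbox S1 S2 S3 S4 x)%:R * (inbox S1 S2 S3 S4 y)%:R
   = ((x.1.1.1 \in S1) && (y.1.1.1 \in S1))%:R * ((x.1.1.2 \in S2) && (y.1.1.2 \in S2))%:R
   * ((x.1.2 \in S3) && (y.1.2 \in S3))%:R * ((x.2 \in S4) && (y.2 \in S4))%:R :> R.
  move=> S1 S2 S3 S4; rewrite /inbox.
  case: (x.1.1.1 \in S1); case: (y.1.1.1 \in S1);
  case: (x.1.1.2 \in S2); case: (y.1.1.2 \in S2);
  case: (x.1.2 \in S3); case: (y.1.2 \in S3);
  case: (x.2 \in S4); case: (y.2 \in S4); by rewrite /= ?mul1r ?mul0r ?mulr0.
under eq_bigr do under eq_bigr do under eq_bigr do under eq_bigr do rewrite E.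
rewrite prod4.
apply: le_trans (_ : (bnd s d1 (x.1.1.1 == y.1.1.1))%:R * (bnd s d2 (x.1.1.2 == y.1.1.2))%:R
   * (bnd s d3 (x.1.2 == y.1.2))%:R * (bnd s d4 (x.2 == y.2))%:R <= _).
  have g k (J : {set 'I_k} -> bool) (f : {set 'I_k} -> bool) : 0 <= \sum_(S | J S) (f S)%:R :> R.
    by apply: sumr_ge0 => S _; apply: ler0n.
  by rewrite !ler_pM ?mulr_ge0 ?g ?cnt_bnd.
rewrite -!natrM ler_nat.
by apply: bnd_prod.
Qed.

End B5.

Section B6.
Variable R : realType.
Variables (s d1 d2 d3 d4 : nat).
Hypotheses (hs : (2 <= s)%N) (h1 : (s <= d1)%N) (h12 : (d1 <= d2)%N)
  (h23 : (d2 <= d3)%N) (h34 : (d3 <= d4)%N).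
Local Notation T := (idx 'I_d1 'I_d2 'I_d3 'I_d4).
Local Notation C := R[i].

Lemma nr0 : nr (0 : C) = 0.
Proof. by rewrite /nr mul0r. Qed.

Lemma sum_Gv_sub (psi : T -> C) :
  \sum_(S1 : {set 'I_d1} | #|S1| == s) \sum_(S2 : {set 'I_d2} | #|S2| == s)
  \sum_(S3 : {set 'I_d3} | #|S3| == s) \sum_(S4 : {set 'I_d4} | #|S4| == s)
    Gv (@vsub R _ _ _ _ S1 S2 S3 S4 psi)
  <= (cA s d1 * cA s d2 * cB s d3 * cB s d4)%:R * Gv psi.
Proof.
under eq_bigr do under eq_bigr do under eq_bigr do under eq_bigr do rewrite Gv_sub.
under eq_bigr do under eq_bigr do under eq_bigr do rewrite push3.
under eq_bigr do under eq_bigr do rewrite push3.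
under eq_bigr do rewrite push3.
rewrite push3.
rewrite /Gv mulr_sumr; apply: ler_sum => a _.
rewrite mulr_sumr; apply: ler_sum => x _.
rewrite mulr_sumr; apply: ler_sum => y _.
case: (ltnP (nd x y) 2) => h.
  rewrite wv_nd // nr0 mulr0.
  under eq_bigr do under eq_bigr do under eq_bigr do under eq_bigr do rewrite mulr0.
  by rewrite !big1_eq.
have -> : forall F : {set 'I_d1} -> {set 'I_d2} -> {set 'I_d3} -> {set 'I_d4} -> R,
  \sum_(S1 : {set 'I_d1} | #|S1| == s) \sum_(S2 : {set 'I_d2} | #|S2| == s)
  \sum_(S3 : {set 'I_d3} | #|S3| == s) \sum_(S4 : {set 'I_d4} | #|S4| == s)
    (F S1 S2 S3 S4 * nr (wv a psi x y))
  = (\sum_(S1 : {set 'I_d1} | #|S1| == s) \sum_(S2 : {set 'I_d2} | #|S2| == s)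
  \sum_(S3 : {set 'I_d3} | #|S3| == s) \sum_(S4 : {set 'I_d4} | #|S4| == s)
    F S1 S2 S3 S4) * nr (wv a psi x y).
  move=> F; rewrite mulr_suml; apply: eq_bigr => S1 _; rewrite mulr_suml.
  apply: eq_bigr => S2 _; rewrite mulr_suml; apply: eq_bigr => S3 _; by rewrite mulr_suml.
apply: ler_wpM2r; [exact: nr_ge0 | exact: Nbox].
Qed.
End B6.

Section Mink.
Variable R : realType.
Variable I : finType.
Variable P : pred I.

Lemma prodsum (f g : I -> R) :
  \sum_(i | P i) \sum_(j | P j) (f i * g j) = (\sum_(i | P i) f i) * (\sum_(j | P j) g j).
Proof. rewrite mulr_suml; apply: eq_bigr => i _; by rewrite mulr_sumr. Qed.

Lemma CS (u v : I -> R) :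
  (\sum_(i | P i) u i * v i) ^+ 2 <= (\sum_(i | P i) u i ^+ 2) * (\sum_(i | P i) v i ^+ 2).
Proof.
have H : 0 <= \sum_(i | P i) \sum_(j | P j) (u i * v j - u j * v i) ^+ 2.
  by apply: sumr_ge0 => i _; apply: sumr_ge0 => j _; apply: sqr_ge0.
have E : forall i j, (u i * v j - u j * v i) ^+ 2 =
   (u i ^+ 2 * v j ^+ 2 + v i ^+ 2 * u j ^+ 2) - (2%:R * (u i * v i)) * (u j * v j).
  by move=> i j; ring.
have E2 : \sum_(i | P i) \sum_(j | P j) (u i * v j - u j * v i) ^+ 2 =
  (\sum_(i | P i) u i ^+ 2) * (\sum_(i | P i) v i ^+ 2)
  + (\sum_(i | P i) v i ^+ 2) * (\sum_(i | P i) u i ^+ 2)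
  - (\sum_(i | P i) 2%:R * (u i * v i)) * (\sum_(i | P i) u i * v i).
  under eq_bigr do under eq_bigr do rewrite E.
  under eq_bigr do rewrite sumrB big_split /=.
  by rewrite sumrB big_split /= !prodsum.
rewrite E2 -mulr_sumr in H.
rewrite expr2; lra.
Qed.

Definition nrm (f : I -> R) := Num.sqrt (\sum_(i | P i) f i ^+ 2).

Lemma nrm_ge0 f : 0 <= nrm f.
Proof. exact: sqrtr_ge0. Qed.

Lemma nrmD (u v : I -> R) : nrm (fun i => u i + v i) <= nrm u + nrm v.
Proof.
rewrite /nrm.
set a := Num.sqrt (\sum_(i | P i) u i ^+ 2); set b := Num.sqrt (\sum_(i | P i) v i ^+ 2).
have a0 : 0 <= a by apply: sqrtr_ge0.
have b0 : 0 <= b by apply: sqrtr_ge0.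
have su : \sum_(i | P i) u i ^+ 2 = a ^+ 2.
  rewrite sqr_sqrtr //; apply: sumr_ge0 => i _; exact: sqr_ge0.
have sv : \sum_(i | P i) v i ^+ 2 = b ^+ 2.
  rewrite sqr_sqrtr //; apply: sumr_ge0 => i _; exact: sqr_ge0.
have cs : \sum_(i | P i) u i * v i <= a * b.
  have := CS u v; rewrite su sv -exprMn => h.
  apply: le_trans (ler_norm _) _.
  rewrite -sqrtr_sqr -(ger0_norm (mulr_ge0 a0 b0)) -sqrtr_sqr ler_sqrt //.
  exact: sqr_ge0.
have e : \sum_(i | P i) (u i + v i) ^+ 2 =
  \sum_(i | P i) u i ^+ 2 + 2%:R * \sum_(i | P i) u i * v i + \sum_(i | P i) v i ^+ 2.
  rewrite mulr_sumr -!big_split /=; apply: eq_bigr => i _; ring.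
rewrite e su sv.
rewrite -(ger0_norm (addr_ge0 a0 b0)) -sqrtr_sqr.
rewrite ler_sqrt; last by apply: sqr_ge0.
rewrite sqrrD; lra.
Qed.

Lemma nrm_ext (f g : I -> R) : (forall i, f i = g i) -> nrm f = nrm g.
Proof. by move=> h; rewrite /nrm; congr Num.sqrt; apply: eq_bigr => i _; rewrite h. Qed.

Lemma nrm_sum n (f : 'I_n -> I -> R) :
  nrm (fun i => \sum_(k < n) f k i) <= \sum_(k < n) nrm (f k).
Proof.
elim: n f => [|n IH] f.
  rewrite big_ord0 /nrm.
  under eq_bigr do rewrite big_ord0 expr0n /=.
  by rewrite big1_eq sqrtr0.
rewrite big_ord_recr /=.
rewrite (@nrm_ext _ (fun i => \sum_(k < n) f (widen_ord (leqnSn n) k) i + f ord_max i));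
  last by move=> i; rewrite big_ord_recr.
apply: le_trans (nrmD _ _) _.
by rewrite lerD2r; apply: IH.
Qed.

Lemma nrm_le (f g : I -> R) : (forall i, P i -> 0 <= f i <= g i) -> nrm f <= nrm g.
Proof.
move=> h; rewrite /nrm ler_sqrt; last by apply: sumr_ge0 => i _; apply: sqr_ge0.
apply: ler_sum => i Pi; have /andP[f0 fg] := h i Pi.
by rewrite !expr2 ler_pM.
Qed.

Lemma key_mink n (X : I -> R) (c : 'I_n -> I -> R) (lam : 'I_n -> R) (D : R) :
  0 <= D ->
  (forall i, P i -> 0 <= X i <= \sum_(k < n) c k i) ->
  (forall k i, 0 <= c k i) ->
  (forall k, \sum_(i | P i) c k i ^+ 2 <= D * lam k ^+ 2) ->
  (forall k, 0 <= lam k) ->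
  nrm X <= Num.sqrt D * \sum_(k < n) lam k.
Proof.
move=> D0 hX hc hD hl.
apply: le_trans (nrm_le hX) _.
apply: le_trans (nrm_sum c) _.
rewrite mulr_sumr; apply: ler_sum => k _.
rewrite /nrm -(ger0_norm (hl k)) -sqrtr_sqr -sqrtrM ?sqr_ge0 //.
by rewrite ler_sqrt ?mulr_ge0 ?sqr_ge0 // real_normK ?num_real.
Qed.

End Mink.

Section D.
Variable R : realType.
Variable T : finType.
Local Notation C := R[i].

Lemma conjcM (x y : C) : conjc (x * y) = conjc x * conjc y.
Proof. exact: rmorphM. Qed.

Definition q (A : T -> T -> C) (v : T -> C) :=
  \sum_x \sum_y conjc (v x) * A x y * v y.

Lemma sum_dl (f : T -> C) x0 : \sum_z (z == x0)%:R * f z = f x0.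
Proof.
rewrite (bigD1 x0) //= eqxx mul1r big1 ?addr0 // => z /negbTE ->.
by rewrite mul0r.
Qed.

Lemma sum_dr (f : T -> C) x0 : \sum_z f z * (z == x0)%:R = f x0.
Proof. rewrite -[RHS](sum_dl f x0); apply: eq_bigr => z _; exact: mulrC. Qed.

Lemma qexp A v c x0 :
  q A (fun z => v z + c * (z == x0)%:R) =
  q A v + conjc c * (\sum_y A x0 y * v y) + c * (\sum_x conjc (v x) * A x x0)
  + conjc c * c * A x0 x0.
Proof.
rewrite /q.
have E x y : conjc (v x + c * (x == x0)%:R) * A x y * (v y + c * (y == x0)%:R) =
  conjc (v x) * A x y * v y + (conjc (v x) * A x y * c) * (y == x0)%:R
  + (x == x0)%:R * (conjc c * (A x y * v y))
  + (x == x0)%:R * ((conjc c * c * A x y) * (y == x0)%:R).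
  rewrite rmorphD rmorphM /= conjc_nat; ring.
under eq_bigr do under eq_bigr do rewrite E.
have h3 x : \sum_y (x == x0)%:R * (conjc c * (A x y * v y)) =
    (x == x0)%:R * (conjc c * \sum_y A x y * v y) by rewrite !mulr_sumr.
have h4 x : \sum_y (x == x0)%:R * ((conjc c * c * A x y) * (y == x0)%:R) =
    (x == x0)%:R * (conjc c * c * A x x0).
  by rewrite -(sum_dr (fun y => conjc c * c * A x y) x0) mulr_sumr.
under eq_bigr => x _ do rewrite !big_split /= (sum_dr (fun i => conjc (v x) * A x i * c)) h3 h4.
rewrite !big_split /= (sum_dl (fun x => conjc c * \sum_y A x y * v y))
  (sum_dl (fun x => conjc c * c * A x x0)).
have -> : \sum_x conjc (v x) * A x x0 * c = c * \sum_x conjc (v x) * A x x0.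
  rewrite mulr_sumr; apply: eq_bigr => x _; ring.
ring.
Qed.


Definition psdT (A : T -> T -> C) := forall v, 0 <= q A v.

Lemma q_delta A x0 c : q A (fun z => 0 + c * (z == x0)%:R) = conjc c * c * A x0 x0.
Proof.
rewrite qexp.
have -> : q A (fun _ => 0) = 0.
  by rewrite /q big1 // => x _; rewrite big1 // => y _; rewrite mulr0.
rewrite big1; last by move=> y _; rewrite mulr0.
rewrite big1; last by move=> y _; rewrite rmorph0 !mul0r.
by rewrite !mulr0 !add0r.
Qed.

Lemma diag_ge0 A x : psdT A -> 0 <= A x x.
Proof.
move=> hA; have := hA (fun z => 0 + 1 * (z == x)%:R).
by rewrite q_delta rmorph1 !mul1r.
Qed.

Lemma q_pair A x y c : q A (fun z => (z == x)%:R + c * (z == y)%:R) =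
  A x x + conjc c * A y x + c * A x y + conjc c * c * A y y.
Proof.
rewrite (qexp A (fun z => (z == x)%:R)).
congr (_ + _ + _ + _).
- rewrite /q.
  under eq_bigr => x1 _ do rewrite (sum_dr (fun y0 => conjc ((x1 == x)%:R) * A x1 y0) x) conjc_nat.
  exact: (sum_dl (fun x1 => A x1 x) x).
- by rewrite (sum_dr (fun y0 => A y y0) x).
- congr (_ * _).
  rewrite (eq_bigr (fun z => (z == x)%:R * A z y)); last by move=> z _; rewrite conjc_nat.
  exact: (sum_dl (fun z => A z y) x).
Qed.

Lemma herm A : psdT A -> forall x y, A y x = conjc (A x y).
Proof.
move=> hA x y.
have h1 := hA (fun z => (z == x)%:R + 1 * (z == y)%:R).
have h2 := hA (fun z => (z == x)%:R + 'i%C * (z == y)%:R).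
rewrite q_pair in h1; rewrite q_pair in h2.
have ha := diag_ge0 x hA; have hb := diag_ge0 y hA.
move: h1 h2 ha hb.
case: (A x x) => a1 a2; case: (A y y) => b1 b2; case: (A x y) => p1 p2; case: (A y x) => r1 r2.
rewrite !lecE /= => /andP[/eqP e1 _] /andP[/eqP e2 _] /andP[/eqP e3 _] /andP[/eqP e4 _].
congr (_ +i* _); lra.
Qed.


Lemma prodsumC (f g : T -> C) :
  \sum_x \sum_y (f x * g y) = (\sum_x f x) * (\sum_y g y).
Proof. rewrite mulr_suml; apply: eq_bigr => i _; by rewrite mulr_sumr. Qed.

Section Schur.
Variable A : T -> T -> C.
Hypothesis hA : psdT A.
Variable x0 : T.
Let a := A x0 x0.
Hypothesis ha : a != 0.
Definition schur x y := A x y - A x x0 * A x0 y / a.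

Lemma schur_psd : psdT schur.
Proof.
move=> w.
pose beta := \sum_y A x0 y * w y.
pose gamma := \sum_x conjc (w x) * A x x0.
have ca : conjc a = a by rewrite /a -herm.
have cb : conjc beta = gamma.
  rewrite /beta rmorph_sum; apply: eq_bigr => y _.
  by rewrite rmorphM /= -herm // mulrC.
have := hA (fun z => w z + (- beta / a) * (z == x0)%:R).
rewrite qexp -/beta -/gamma.
have -> : q schur w = q A w - gamma * beta / a.
  rewrite /q /schur.
  have E x y : conjc (w x) * (A x y - A x x0 * A x0 y / a) * w y =
     conjc (w x) * A x y * w y - (conjc (w x) * A x x0) * (A x0 y * w y / a).
    by ring.
  under eq_bigr do under eq_bigr do rewrite E.
  under eq_bigr do rewrite sumrB.
  rewrite sumrB prodsumC -/gamma.
  congr (_ - _); rewrite -mulr_suml mulrA //.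
rewrite rmorphM rmorphN /= conjc_inv ca cb -/a.
have -> : q A w + - gamma / a * beta + - beta / a * gamma + - gamma / a * (- beta / a) * a
   = q A w - gamma * beta / a.
  by field.
by [].
Qed.

Lemma schur_diag0 : schur x0 x0 = 0.
Proof. by rewrite /schur -/a; field. Qed.

Lemma schur_diag x : A x x = 0 -> schur x x = 0.
Proof.
move=> hx.
have hB := diag_ge0 x schur_psd.
have a0 : 0 < a by rewrite lt_def ha diag_ge0.
have z0 : 0 <= A x x0 * conjc (A x x0) by apply: mulcJ_ge0.
move: hB; rewrite /schur hx sub0r (herm hA x0 x) => hB.
apply/eqP; rewrite eq_le hB andbT oppr_le0.
by apply: divr_ge0; [rewrite mulrC; apply: mulcJ_ge0 | apply: ltW].
Qed.

End Schur.

Lemma zero_case A : psdT A -> (forall x, A x x = 0) -> forall x y, A x y = 0.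
Proof.
move=> hA h0 x y.
have := hA (fun z => (z == x)%:R + (- conjc (A x y)) * (z == y)%:R).
rewrite q_pair !h0 rmorphN /= conjcK (herm hA x y).
have -> : 0 + - A x y * conjc (A x y) + - conjc (A x y) * A x y + - A x y * - conjc (A x y) * 0
   = - (2%:R * (A x y * conjc (A x y))) by ring.
rewrite oppr_ge0 pmulr_rle0 ?ltr0n // => h.
have z0 : 0 <= A x y * conjc (A x y) by apply: mulcJ_ge0.
have : A x y * conjc (A x y) = 0 by apply/eqP; rewrite eq_le h z0.
by move/eqP; rewrite mulf_eq0 conjc_eq0 orbb => /eqP.
Qed.

Lemma zero_decomp A : psdT A -> (#|[pred x | A x x != 0%R]| = 0)%N ->
  forall x y, A x y = \sum_(k < 0) (fun (_ : 'I_0) (_ : T) => (0 : C)) k x * conjc ((fun (_ : 'I_0) (_ : T) => (0 : C)) k y).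
Proof.
move=> hA e x y; rewrite big_ord0; apply: (zero_case hA) => z.
have := card0_eq e z; rewrite !inE => /negbFE/eqP; exact.
Qed.

Lemma decomp_ex n : forall A, psdT A -> (#|[pred x | A x x != 0%R]| <= n)%N ->
  exists m (psi : 'I_m -> T -> C), forall x y, A x y = \sum_(k < m) psi k x * conjc (psi k y).
Proof.
elim: n => [|n IH] A hA hn.
  by exists 0%N, (fun _ _ => 0); apply: zero_decomp => //; apply/eqP; rewrite -leqn0.
case: (posnP #|[pred x | A x x != 0%R]|) => [e|pos].
  by exists 0%N, (fun _ _ => 0); apply: zero_decomp.
have [x0 hx0] := card_gt0P pos; rewrite inE in hx0.
have hB := schur_psd hA hx0.
have hcnt : (#|[pred x | schur A x0 x x != 0%R]| <= n)%N.
  have h1 : (#|[pred x | schur A x0 x x != 0%R]| <= #|[predD1 [pred x | A x x != 0%R] & x0]|)%N.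
    apply: subset_leq_card; apply/fintype.subsetP => x; rewrite !inE => hx.
    apply/andP; split.
      by apply: contraNneq hx => ->; rewrite schur_diag0.
    by apply: contra hx => /eqP h; rewrite (schur_diag hA hx0 h).
  have := cardD1 x0 [pred x | A x x != 0%R]; rewrite inE hx0 /= => e.
  rewrite e add1n ltnS in hn; exact: leq_trans h1 hn.
have [m [psi hpsi]] := IH _ hB hcnt.
set a := A x0 x0 in hx0.
have a0 : 0 < a by rewrite lt_def hx0 diag_ge0.
have aIm : complex.Im a = 0 by apply: ger0_Im; apply: ltW.
have aRe : 0 < complex.Re a by move: a0; rewrite ltcE /= => /andP[].
set r := Num.sqrt (complex.Re a).
have r0 : 0 < r by rewrite sqrtr_gt0.
have rr : r%:C * r%:C = a.
  rewrite -rmorphM /= -expr2 sqr_sqrtr; last exact: ltW.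
  by move: aIm; case: (a) => ar ai /= ->.
pose v z := A z x0 / r%:C.
exists m.+1, (fun k z => match unlift ord0 k with Some j => psi j z | None => v z end).
move=> x y; rewrite big_ord_recl unlift_none.
under eq_bigr => k _ do rewrite liftK.
have cv : conjc (A y x0 / r%:C) = A x0 y / r%:C.
  have ci : conjc ((r%:C)^-1) = (r%:C)^-1.
    by rewrite -fmorphV conjc_real.
  by rewrite conjcM ci (herm hA x0 y) conjcK.
rewrite -(hpsi x y) /schur /v cv -/a.
have rC : r%:C != 0 by rewrite eq_complex /= negb_and (gt_eqF r0).
rewrite -rr; field.
exact: rC.
Qed.

End D.

Section CM.
Variable R : realType.
Variables I1 I2 I3 I4 : finType.
Local Notation C := R[i].
Local Notation T := (idx I1 I2 I3 I4).

Lemma conc_vec_ge0 (psi : T -> C) : 0 <= conc_vec psi.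
Proof. by rewrite /conc_vec mulr_ge0 ?invr_ge0 ?ler0n ?sqrtr_ge0. Qed.

Definition cset (sigma : T -> T -> C) : set R :=
  [set c : R | exists (n : nat) (psi : 'I_n -> T -> C),
     is_decomp sigma psi /\ c = \sum_(k < n) conc_vec (psi k)]%classic.

Lemma cset_lb sigma : has_lbound (cset sigma).
Proof.
exists 0 => c [n [psi [_ ->]]].
by apply: sumr_ge0 => k _; apply: conc_vec_ge0.
Qed.

Lemma cm_le sigma n (psi : 'I_n -> T -> C) : is_decomp sigma psi ->
  conc_mixed sigma <= \sum_(k < n) conc_vec (psi k).
Proof.
move=> h; apply: (ge_inf (cset_lb sigma)).
by exists n, psi.
Qed.

Lemma cm_ge0 sigma n (psi : 'I_n -> T -> C) : is_decomp sigma psi -> 0 <= conc_mixed sigma.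
Proof.
move=> h; apply: lb_le_inf.
  by exists (\sum_(k < n) conc_vec (psi k)), n, psi.
move=> c [m [phi [_ ->]]].
by apply: sumr_ge0 => k _; apply: conc_vec_ge0.
Qed.

Lemma cm_approx sigma n (psi : 'I_n -> T -> C) : is_decomp sigma psi ->
  forall e, 0 < e -> exists m (phi : 'I_m -> T -> C),
    is_decomp sigma phi /\ \sum_(k < m) conc_vec (phi k) < conc_mixed sigma + e.
Proof.
move=> h e e0.
have ne : (cset sigma !=set0)%classic by exists (\sum_(k < n) conc_vec (psi k)), n, psi.
have hl : inf (cset sigma) < conc_mixed sigma + e by rewrite ltrDl.
have [c [m [phi [hp ->]]] hlt] := inf_lt ne hl.
by exists m, phi.
Qed.
End CM.

Lemma nest4 (R : realType) (K1 K2 K3 K4 : finType) (P1 : pred K1) (P2 : pred K2)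
  (P3 : pred K3) (P4 : pred K4) (F : K1 -> K2 -> K3 -> K4 -> R) :
  \sum_(k1 | P1 k1) \sum_(k2 | P2 k2) \sum_(k3 | P3 k3) \sum_(k4 | P4 k4) F k1 k2 k3 k4
  = \sum_(p : ((K1 * K2) * K3) * K4 | ((P1 p.1.1.1 && P2 p.1.1.2) && P3 p.1.2) && P4 p.2)
      F p.1.1.1 p.1.1.2 p.1.2 p.2.
Proof. by rewrite pair_big pair_big pair_big. Qed.

Theorem theorem4 (R : realType) (d1 d2 d3 d4 : nat)
  (hd1 : (2 <= d1)%N) (hd12 : (d1 <= d2)%N) (hd23 : (d2 <= d3)%N)
  (hd34 : (d3 <= d4)%N)
  (rho : idx 'I_d1 'I_d2 'I_d3 'I_d4 -> idx 'I_d1 'I_d2 'I_d3 'I_d4 -> R[i])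
  (hrho : density rho)
  (s : nat) (hs2 : (2 <= s)%N) (hsd : (s <= d1)%N) :
  (('C(d1 - 2, s - 2) * 'C(d2 - 2, s - 2) * 'C(d3 - 1, s - 1)
      * 'C(d4 - 1, s - 1))%N%:R)^-1
    * (\sum_(S1 : {set 'I_d1} | #|S1| == s)
       \sum_(S2 : {set 'I_d2} | #|S2| == s)
       \sum_(S3 : {set 'I_d3} | #|S3| == s)
       \sum_(S4 : {set 'I_d4} | #|S4| == s)
         conc_mixed (substate rho S1 S2 S3 S4) ^+ 2)
  <= conc_mixed rho ^+ 2.
Proof.
case: hrho => hpsd _.
have hpsdT : psdT rho := hpsd.
have [m0 [psi0 hdec0]] := decomp_ex hpsdT (max_card _).
have hsub : forall n (psi : 'I_n -> _ -> R[i]), is_decomp rho psi ->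
  forall S1 S2 S3 S4, is_decomp (substate rho S1 S2 S3 S4)
     (fun k => @vsub R _ _ _ _ S1 S2 S3 S4 (psi k)).
  by move=> n psi h S1 S2 S3 S4 u v; exact: h.
set Dn := ('C(d1 - 2, s - 2) * 'C(d2 - 2, s - 2) * 'C(d3 - 1, s - 1) * 'C(d4 - 1, s - 1))%N.
have Dpos : (0 < Dn)%N.
  have b1 : (0 < 'C(d1 - 2, s - 2))%N by rewrite bin_gt0; lia.
  have b2 : (0 < 'C(d2 - 2, s - 2))%N by rewrite bin_gt0; lia.
  have b3 : (0 < 'C(d3 - 1, s - 1))%N by rewrite bin_gt0; lia.
  have b4 : (0 < 'C(d4 - 1, s - 1))%N by rewrite bin_gt0; lia.
  by rewrite /Dn !muln_gt0 b1 b2 b3 b4.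
have DR0 : 0 < Dn%:R :> R by rewrite ltr0n.
have sD0 : 0 < Num.sqrt (Dn%:R : R) by rewrite sqrtr_gt0.
set c := conc_mixed rho.
have c0 : 0 <= c by apply: (cm_ge0 hdec0).
rewrite ler_pdivrMl //.
rewrite (nest4 _ _ _ _ (fun S1 S2 S3 S4 => conc_mixed (substate rho S1 S2 S3 S4) ^+ 2)).
set P := fun p : ((({set 'I_d1} * {set 'I_d2}) * {set 'I_d3}) * {set 'I_d4}) =>
   (((#|p.1.1.1| == s) && (#|p.1.1.2| == s)) && (#|p.1.2| == s)) && (#|p.2| == s).
set X := fun p : ((({set 'I_d1} * {set 'I_d2}) * {set 'I_d3}) * {set 'I_d4}) =>
   conc_mixed (substate rho p.1.1.1 p.1.1.2 p.1.2 p.2).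
have claim : nrm P X <= Num.sqrt (Dn%:R : R) * c.
  apply/ler_addgt0Pr => e e0.
  pose eps := e / Num.sqrt (Dn%:R : R).
  have eps0 : 0 < eps by rewrite divr_gt0.
  have [n [psi [hd hlt]]] := cm_approx hdec0 eps0.
  pose cc := fun (k : 'I_n) (p : ((({set 'I_d1} * {set 'I_d2}) * {set 'I_d3}) * {set 'I_d4})) =>
     conc_vec (@vsub R _ _ _ _ p.1.1.1 p.1.1.2 p.1.2 p.2 (psi k)).
  have hm := @key_mink R _ P n X cc (fun k => conc_vec (psi k)) (Dn%:R) (ltW DR0).
  have hk : nrm P X <= Num.sqrt (Dn%:R : R) * \sum_(k < n) conc_vec (psi k).
  apply: hm.
  - move=> p _; rewrite /X /cc.
    rewrite (cm_ge0 (hsub _ _ hd _ _ _ _)) /=.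
    exact: (cm_le (hsub _ _ hd _ _ _ _)).
  - by move=> k p; apply: conc_vec_ge0.
  - move=> k.
    have h := sum_Gv_sub hs2 hsd hd12 hd23 hd34 (psi k).
    rewrite (nest4 _ _ _ _ (fun S1 S2 S3 S4 => Gv (@vsub R _ _ _ _ S1 S2 S3 S4 (psi k)))) in h.
    rewrite /cc conc_vec_sq.
    under eq_bigr do rewrite conc_vec_sq.
    rewrite -mulr_suml mulrA ler_pM2r ?invr_gt0 ?ltr0n //.
  - by move=> k; apply: conc_vec_ge0.
  apply: le_trans hk _.
  have -> : Num.sqrt (Dn%:R : R) * c + e = Num.sqrt (Dn%:R : R) * (c + eps).
    by rewrite /eps; field; rewrite gt_eqF.
  by rewrite ler_pM2l // ltW.
have S0 : 0 <= \sum_(p | P p) X p ^+ 2 by apply: sumr_ge0 => p _; apply: sqr_ge0.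
rewrite -(sqr_sqrtr S0) -/(nrm P X).
have n0 : 0 <= nrm P X by apply: nrm_ge0.
have := ler_pM n0 n0 claim claim.
rewrite -!expr2 exprMn sqr_sqrtr // sqr_sqrtr //; apply: ltW.
Qed.
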